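(* Let $(G,M,\Delta)$ be a Garside structure and $(H,N,\delta)$ a parabolic substructure with $H\ne\{1\}$. Let $\mathcal S=\mathrm{Div}(\Delta)\setminus\{1\}$ and let $d$ be the word metric on $G$ with respect to $\mathcal S$. Then $G$ has $5$-fellow projections on $H$ with respect to $\mathcal S$: for all $\alpha_1,\alpha_2\in G$ with $d(\alpha_1,\alpha_2)=1$ and every $\beta_1\in\pi_H(\alpha_1)$ there exists $\beta_2\in\pi_H(\alpha_2)$ with $d(\beta_1,\beta_2)\le 5$.
   Context: Let $G$ be a group and $M$ a submonoid with $M\cap M^{-1}=\{1\}$. Define $\alpha\le_L\beta$ iff $\alpha^{-1}\beta\in M$, and $\alpha\le_R\beta$ iff $\beta\alpha^{-1}\in M$. For $a\in M$ let $\mathrm{Div}_L(a)=\{b\in M: b\le_L a\}$, $\mathrm{Div}_R(a)=\{b\in M: b\le_R a\}$; $a$ is balanced if these coincide, and then $\mathrm{Div}(a)$ denotes this set. $M$ is Noetherian if each $a\in M$ admits an $n$ such that $a$ is not a product of more than $n$ non-trivial factors. A Garside structure $(G,M,\Delta)$: $\Delta\in M$ balanced, $M$ Noetherian, $\mathrm{Div}(\Delta)$ finite and generating $M$ as a monoid and $G$ as a group, $(G,\le_L)$ a lattice. A parabolic substructure $(H,N,\delta)$: $\delta\in M$ balanced, $H$ (resp. $N$) the subgroup (resp. submonoid) generated by $\mathrm{Div}(\delta)$, and $\mathrm{Div}(\delta)=\mathrm{Div}(\Delta)\cap N$. The word metric is $d(\alpha,\beta)=\lg(\alpha^{-1}\beta)$,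 with $\lg$ the word length with respect to $\mathcal S$; $d(\alpha,H)=\min_{\beta\in H}d(\alpha,\beta)$, and the projection of $\alpha$ on $H$ is $\pi_H(\alpha)=\{\beta\in H: d(\alpha,\beta)=d(\alpha,H)\}$. *)

(* Defs.v *)
From Stdlib Require Import List Arith.
Import ListNotations.

Section GroupDefs.
Context {G : Type} (mul : G -> G -> G) (one : G) (inv : G -> G).

Definition is_group : Prop :=
  (forall x y z, mul x (mul y z) = mul (mul x y) z) /\
  (forall x, mul one x = x) /\ (forall x, mul x one = x) /\
  (forall x, mul (inv x) x = one) /\ (forall x, mul x (inv x) = one).

Definition prodl (l : list G) : G := fold_right mul one l.

Definition letter (p : bool * G) : G := if fst p then snd p else inv (snd p).
Definition eval_word (w : list (bool * G)) : G := prodl (map letter w).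

Definition is_submonoid (M : G -> Prop) : Prop :=
  M one /\ forall x y, M x -> M y -> M (mul x y).

Definition pointed (M : G -> Prop) : Prop :=
  forall x, M x -> M (inv x) -> x = one.

Definition leL (M : G -> Prop) (a b : G) : Prop := M (mul (inv a) b).
Definition leR (M : G -> Prop) (a b : G) : Prop := M (mul b (inv a)).

Definition DivL (M : G -> Prop) (a b : G) : Prop := M b /\ leL M b a.
Definition DivR (M : G -> Prop) (a b : G) : Prop := M b /\ leR M b a.

Definition balanced (M : G -> Prop) (a : G) : Prop :=
  M a /\ forall b, DivL M a b <-> DivR M a b.

(* Div(a) (meaningful for balanced a, where it equals Div_R(a)) *)
Definition Div (M : G -> Prop) (a : G) : G -> Prop := DivL M a.

Definition noetherian (M : G -> Prop) : Prop :=
  forall a, M a -> exists n, forall l : list G,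
    Forall (fun x => M x /\ x <> one) l -> prodl l = a -> length l <= n.

Definition finite_pred (P : G -> Prop) : Prop :=
  exists l : list G, forall x, P x -> In x l.

Definition gen_monoid (P : G -> Prop) (g : G) : Prop :=
  exists l : list G, Forall P l /\ prodl l = g.

Definition gen_group (P : G -> Prop) (g : G) : Prop :=
  exists w : list (bool * G), Forall (fun p => P (snd p)) w /\ eval_word w = g.

Definition is_lattice (le : G -> G -> Prop) : Prop :=
  (forall a b, exists m, le m a /\ le m b /\ forall c, le c a -> le c b -> le c m) /\
  (forall a b, exists j, le a j /\ le b j /\ forall c, le a c -> le b c -> le j c).

Definition garside_structure (M : G -> Prop) (Delta : G) : Prop :=
  is_submonoid M /\ pointed M /\
  balanced M Delta /\ noetherian M /\ finite_pred (Div M Delta) /\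
  (forall a, M a <-> gen_monoid (Div M Delta) a) /\
  (forall g, gen_group (Div M Delta) g) /\
  is_lattice (leL M).

(* (H, N, δ) parabolic substructure: H and N are determined by δ *)
Definition Hsub (M : G -> Prop) (delta : G) : G -> Prop := gen_group (Div M delta).
Definition Nsub (M : G -> Prop) (delta : G) : G -> Prop := gen_monoid (Div M delta).

Definition parabolic_substructure (M : G -> Prop) (Delta delta : G) : Prop :=
  M delta /\ balanced M delta /\
  forall b, Div M delta b <-> (Div M Delta b /\ Nsub M delta b).

Definition Sgen (M : G -> Prop) (Delta : G) (s : G) : Prop := Div M Delta s /\ s <> one.

Definition lg_le (S : G -> Prop) (g : G) (n : nat) : Prop :=
  exists w : list (bool * G), Forall (fun p => S (snd p)) w /\ eval_word w = g /\ length w <= n.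

Definition lg_is (S : G -> Prop) (g : G) (n : nat) : Prop :=
  lg_le S g n /\ forall m, lg_le S g m -> n <= m.

Definition dist_is (S : G -> Prop) (a b : G) (n : nat) : Prop := lg_is S (mul (inv a) b) n.
Definition dist_le (S : G -> Prop) (a b : G) (n : nat) : Prop := lg_le S (mul (inv a) b) n.

Definition proj (S : G -> Prop) (H : G -> Prop) (alpha beta : G) : Prop :=
  H beta /\ exists n, dist_is S alpha beta n /\
    forall beta' m, H beta' -> dist_is S alpha beta' m -> n <= m.

End GroupDefs.

(* Main.v *)
From Pilot Require Import Defs.
From Stdlib Require Import List Arith ZArith Lia Classical.
Import ListNotations.

Section Grp.
Context {G : Type} (mul : G -> G -> G) (one : G) (inv : G -> G).
Context (Hg : is_group mul one inv).
Local Notation "x ** y" := (mul x y) (at level 40, left associativity).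

Lemma mA x y z : x ** (y ** z) = x ** y ** z. Proof. apply Hg. Qed.
Lemma mAr x y z : x ** y ** z = x ** (y ** z). Proof. symmetry; apply Hg. Qed.
Lemma m1l x : one ** x = x. Proof. apply Hg. Qed.
Lemma m1r x : x ** one = x. Proof. apply Hg. Qed.
Lemma mVl x : inv x ** x = one. Proof. apply Hg. Qed.
Lemma mVr x : x ** inv x = one. Proof. apply Hg. Qed.
Lemma mVl' x y : inv x ** (x ** y) = y. Proof. rewrite mA, mVl, m1l; auto. Qed.
Lemma mVr' x y : x ** (inv x ** y) = y. Proof. rewrite mA, mVr, m1l; auto. Qed.
Lemma inv_uniq x y : x ** y = one -> inv x = y.
Proof. intro H. rewrite <- (m1r (inv x)), <- H, mVl'. auto. Qed.
Lemma invM x y : inv (x ** y) = inv y ** inv x.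
Proof. apply inv_uniq. rewrite mAr, (mA y), mVr, m1l, mVr. auto. Qed.
Lemma invI x : inv (inv x) = x.
Proof. apply inv_uniq. apply mVl. Qed.
Lemma inv1 : inv one = one.
Proof. apply inv_uniq. apply m1l. Qed.

End Grp.
Arguments mA {G mul one inv} Hg x y z.
Arguments mAr {G mul one inv} Hg x y z.
Arguments m1l {G mul one inv} Hg x.
Arguments m1r {G mul one inv} Hg x.
Arguments mVl {G mul one inv} Hg x.
Arguments mVr {G mul one inv} Hg x.
Arguments mVl' {G mul one inv} Hg x y.
Arguments mVr' {G mul one inv} Hg x y.
Arguments inv_uniq {G mul one inv} Hg x y.
Arguments invM {G mul one inv} Hg x y.
Arguments invI {G mul one inv} Hg x.
Arguments inv1 {G mul one inv} Hg .

Ltac gs Hg := repeat (rewrite ?(mAr Hg), ?(m1l Hg), ?(m1r Hg),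
   ?(mVl Hg), ?(mVr Hg), ?(mVl' Hg), ?(mVr' Hg),
   ?(invM Hg), ?(invI Hg), ?(inv1 Hg)).
Section Pow.
Context {G : Type} (mul : G -> G -> G) (one : G) (inv : G -> G).
Context (Hg : is_group mul one inv).
Local Notation "x ** y" := (mul x y) (at level 40, left associativity).
Context (e : G).
Definition pw (n : nat) : G := Nat.iter n (fun x => e ** x) one.
Definition zpow (z : Z) : G := pw (Z.to_nat z) ** inv (pw (Z.to_nat (- z))).
Arguments zpow z%_Z_scope.

Lemma pw0 : pw 0 = one. Proof. reflexivity. Qed.
Lemma pwS n : pw (S n) = e ** pw n. Proof. reflexivity. Qed.
Lemma pw_add m n : pw (m + n) = pw m ** pw n.
Proof. induction m; simpl. rewrite (m1l Hg); auto. fold (pw (m+n)). fold (pw m). rewrite IHm. rewrite (mA Hg); auto. Qed.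
Lemma pw_comm m n : pw m ** pw n = pw n ** pw m.
Proof. rewrite <- !pw_add. f_equal. lia. Qed.
Lemma pwS' n : pw (S n) = pw n ** e.
Proof. replace (S n) with (n + 1) by lia. rewrite pw_add. simpl. rewrite (m1r Hg); auto. Qed.
Lemma comm_inv x y : x ** y = y ** x -> inv x ** y = y ** inv x.
Proof. intro H. rewrite <- ((m1r Hg) (inv x ** y)). rewrite <- ((mVr Hg) x). 
  rewrite !(mAr Hg); auto. rewrite ((mA Hg) y x), <- H. gs Hg. auto. Qed.
Lemma zpow_of m n : zpow (Z.of_nat m - Z.of_nat n) = pw m ** inv (pw n).
Proof. unfold zpow. destruct (le_lt_dec n m).
 - replace (Z.to_nat (Z.of_nat m - Z.of_nat n)) with (m - n) by lia.
   replace (Z.to_nat (- (Z.of_nat m - Z.of_nat n))) with 0 by lia.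
   replace m with ((m - n) + n) at 2 by lia. rewrite pw_add, pw0. gs Hg. auto.
 - replace (Z.to_nat (Z.of_nat m - Z.of_nat n)) with 0 by lia.
   replace (Z.to_nat (- (Z.of_nat m - Z.of_nat n))) with (n - m) by lia.
   replace n with ((n - m) + m) at 2 by lia. rewrite pw_add, pw0. gs Hg. auto.
Qed.
Lemma zpow_split z : (z = Z.of_nat (Z.to_nat z) - Z.of_nat (Z.to_nat (-z)))%Z.
Proof. lia. Qed.
Lemma zpow_add a b : zpow (a + b) = zpow a ** zpow b.
Proof.
  rewrite (zpow_split a), (zpow_split b).
  set (a1 := Z.to_nat a). set (a2 := Z.to_nat (-a)). set (b1 := Z.to_nat b). set (b2 := Z.to_nat (-b)).
  replace (Z.of_nat a1 - Z.of_nat a2 + (Z.of_nat b1 - Z.of_nat b2))%Z with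
     (Z.of_nat (a1 + b1) - Z.of_nat (a2 + b2))%Z by lia.
  rewrite !zpow_of, !pw_add. gs Hg. f_equal.
  idtac.
  rewrite <- (invM Hg), (pw_comm a2 b2), (invM Hg).
  rewrite (mA Hg), <- (comm_inv _ _ (pw_comm a2 b1)), (mAr Hg). auto.
Qed.
Lemma zpow0 : zpow 0 = one. Proof. unfold zpow. simpl. gs Hg. auto. Qed.
Lemma zpow_nat n : zpow (Z.of_nat n) = pw n.
Proof. replace (Z.of_nat n) with (Z.of_nat n - Z.of_nat 0)%Z by lia. rewrite zpow_of. simpl. gs Hg. auto. Qed.
Lemma zpow1 : zpow 1 = e.
Proof. change 1%Z with (Z.of_nat 1). rewrite zpow_nat. simpl. gs Hg. auto. Qed.
Lemma zpow_opp a : zpow (- a) = inv (zpow a).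
Proof. symmetry. apply (inv_uniq Hg). rewrite <- zpow_add. replace (a + - a)%Z with 0%Z by lia. apply zpow0. Qed.
Lemma zpowm1 : zpow (-1) = inv e.
Proof. change (-1)%Z with (Z.opp 1). rewrite zpow_opp, zpow1. auto. Qed.
End Pow.
Section Main.
Context {G : Type} (mul : G -> G -> G) (one : G) (inv : G -> G).
Context (Hg : is_group mul one inv).
Local Notation "x ** y" := (mul x y) (at level 40, left associativity).
Context (M : G -> Prop) (Delta delta : G).
Context (HG : garside_structure mul one inv M Delta).
Context (HP : parabolic_substructure mul one inv M Delta delta).

Local Notation le a b := (M (inv a ** b)).
Local Notation DL e := (DivL mul inv M e).

Lemma M1 : M one. Proof. destruct HG as [[H _] _]. auto. Qed.
Lemma Mmul x y : M x -> M y -> M (x ** y). Proof. destruct HG as [[_ H] _]. auto. Qed.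
Lemma Mpt x : M x -> M (inv x) -> x = one. Proof. destruct HG as [_ [H _]]. apply H. Qed.
Lemma le_refl x : le x x. Proof. rewrite (mVl Hg). apply M1. Qed.
Lemma le_trans x y z : le x y -> le y z -> le x z.
Proof. intros H1 H2. replace (inv x ** z) with ((inv x ** y) ** (inv y ** z)) by (gs Hg; auto).
  apply Mmul; auto. Qed.
Lemma le_mull c x y : le x y -> le (c ** x) (c ** y).
Proof. intro H. replace (inv (c ** x) ** (c ** y)) with (inv x ** y) by (gs Hg; auto). auto. Qed.
Lemma le_mull' c x y : le (c ** x) (c ** y) -> le x y.
Proof. intro H. replace (inv x ** y) with (inv (c ** x) ** (c ** y)) by (gs Hg; auto). auto. Qed.
Lemma le_1 x : M x <-> le one x.
Proof. rewrite (inv1 Hg), (m1l Hg). tauto. Qed.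
Lemma le_antisym x y : le x y -> le y x -> x = y.
Proof. intros H1 H2. assert (inv x ** y = one). apply Mpt; auto.
  replace (inv (inv x ** y)) with (inv y ** x) by (gs Hg; auto). auto.
  rewrite <- (mVr' Hg x y), H, (m1r Hg). auto. Qed.

Lemma meet_ex a b : exists m, le m a /\ le m b /\ forall c, le c a -> le c b -> le c m.
Proof. destruct HG as (_&_&_&_&_&_&_&[H _]). apply H. Qed.
Lemma join_ex a b : exists j, le a j /\ le b j /\ forall c, le a c -> le b c -> le j c.
Proof. destruct HG as (_&_&_&_&_&_&_&[_ H]). apply H. Qed.

Section Bal.
Context (e : G) (Hb : balanced mul inv M e).
Lemma bal_R t : DL e t -> M (e ** inv t).
Proof. intro H. apply (proj2 Hb) in H. apply H. Qed.
Lemma c1 t : DL e t -> DL e (inv t ** e).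
Proof. intro H. apply (proj2 Hb). split. apply H. unfold leR. replace (e ** inv (inv t ** e)) with t by (gs Hg; auto). apply H. Qed.
Lemma c2 t : DL e t -> DL e (e ** inv t).
Proof. intro H. split. apply bal_R; auto. unfold leL. replace (inv (e ** inv t) ** e) with t by (gs Hg; auto). apply H. Qed.
Lemma c3 t : DL e t -> DL e (inv e ** t ** e).
Proof. intro H. replace (inv e ** t ** e) with (inv (inv t ** e) ** e) by (gs Hg; auto). apply c1, c1; auto. Qed.
Lemma c4 t : DL e t -> DL e (e ** t ** inv e).
Proof. intro H. replace (e ** t ** inv e) with (e ** inv (e ** inv t)) by (gs Hg; auto). apply c2, c2; auto. Qed.
End Bal.

Lemma balD : balanced mul inv M Delta. Proof. destruct HG as (_&_&H&_). auto. Qed.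
Lemma bald : balanced mul inv M delta. Proof. destruct HP as (_&H&_). auto. Qed.

Lemma M_gen x : M x <-> gen_monoid mul one (Div mul inv M Delta) x.
Proof. destruct HG as (_&_&_&_&_&H&_). apply H. Qed.

Lemma conjD x : M x -> M (inv Delta ** x ** Delta) /\ M (Delta ** x ** inv Delta).
Proof.
  intro Hx. apply M_gen in Hx. destruct Hx as [l [Hl Hp]]. subst x.
  induction Hl; simpl.
  - gs Hg. split; apply M1.
  - destruct IHHl as [I1 I2]. split.
    + replace (inv Delta ** (x ** prodl mul one l) ** Delta) with
        ((inv Delta ** x ** Delta) ** (inv Delta ** prodl mul one l ** Delta)) by (gs Hg; auto).
      apply Mmul; auto. apply (c3 _ balD); auto.
    + replace (Delta ** (x ** prodl mul one l) ** inv Delta) with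
        ((Delta ** x ** inv Delta) ** (Delta ** prodl mul one l ** inv Delta)) by (gs Hg; auto).
      apply Mmul; auto. apply (c4 _ balD); auto.
Qed.

Local Notation pwD := (pw mul one Delta).
Local Notation zD := (zpow mul one inv Delta).

Lemma pwconj n x : M x -> M (inv (pwD n) ** x ** pwD n) /\ M (pwD n ** x ** inv (pwD n)).
Proof.
  revert x; induction n; intros x Hx.
  - rewrite (pw0 mul one). gs Hg. auto.
  - split.
    + rewrite (pwS mul one). replace (inv (Delta ** pwD n) ** x ** (Delta ** pwD n)) with
        (inv (pwD n) ** (inv Delta ** x ** Delta) ** pwD n) by (gs Hg; auto).
      apply IHn. apply conjD; auto.
    + rewrite (pwS' mul one inv Hg). replace (pwD n ** Delta ** x ** inv (pwD n ** Delta)) with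
        (pwD n ** (Delta ** x ** inv Delta) ** inv (pwD n)) by (gs Hg; auto).
      apply IHn. apply conjD; auto.
Qed.

Lemma zconj a x : M x -> M (inv (zD a) ** x ** zD a).
Proof.
  intro Hx. unfold zpow.
  set (p := Z.to_nat a). set (q := Z.to_nat (- a)).
  replace (inv (pwD p ** inv (pwD q)) ** x ** (pwD p ** inv (pwD q))) with
     (pwD q ** (inv (pwD p) ** x ** pwD p) ** inv (pwD q)) by (gs Hg; auto).
  apply pwconj. apply pwconj. auto.
Qed.

Lemma le_mulr c x y : le x y -> le (x ** zD c) (y ** zD c).
Proof. intro H. replace (inv (x ** zD c) ** (y ** zD c)) with (inv (zD c) ** (inv x ** y) ** zD c)
  by (gs Hg; auto). apply zconj; auto. Qed.

Lemma zM a : (0 <= a)%Z -> M (zD a).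
Proof. intro H. replace a with (Z.of_nat (Z.to_nat a)) by lia. rewrite (zpow_nat mul one inv Hg).
  induction (Z.to_nat a). apply M1. rewrite (pwS mul one). apply Mmul; [apply (proj1 balD)|auto]. Qed.

Lemma zle a b : (a <= b)%Z -> le (zD a) (zD b).
Proof. intro H. rewrite <- (zpow_opp mul one inv Hg), <- (zpow_add mul one inv Hg). apply zM. lia. Qed.

Lemma le_zr x a b : (a <= b)%Z -> le (x ** zD a) (x ** zD b).
Proof. intro; apply le_mull, zle; auto. Qed.

Lemma zcomb x a b : x ** zD a ** zD b = x ** zD (a + b).
Proof. rewrite (zpow_add mul one inv Hg). gs Hg. auto. Qed.

Lemma shift1 x y c : le x (y ** zD c) -> le (x ** zD (- c)) y.
Proof. intro H. apply (le_mulr (-c)) in H. rewrite zcomb in H. replace (c + - c)%Z with 0%Z in H by lia.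
  rewrite (zpow0 mul one inv Hg), (m1r Hg) in H. auto. Qed.
Lemma shift2 x y c : le (x ** zD c) y -> le x (y ** zD (- c)).
Proof. intro H. apply (le_mulr (-c)) in H. rewrite zcomb in H. replace (c + - c)%Z with 0%Z in H by lia.
  rewrite (zpow0 mul one inv Hg), (m1r Hg) in H. auto. Qed.


Local Notation S := (Sgen mul one inv M Delta).
Local Notation EW := (eval_word mul one inv).
Local Notation PL := (prodl mul one).

Lemma PL_app l1 l2 : PL (l1 ++ l2) = PL l1 ** PL l2.
Proof. induction l1; simpl. gs Hg; auto. unfold prodl in *. simpl. rewrite IHl1. gs Hg. auto. Qed.
Lemma EW_app w1 w2 : EW (w1 ++ w2) = EW w1 ** EW w2.
Proof. unfold eval_word. rewrite map_app. apply PL_app. Qed.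
Lemma EW_cons p w : EW (p :: w) = letter inv p ** EW w.
Proof. reflexivity. Qed.
Lemma EW_pos l : EW (map (fun s => (true, s)) l) = PL l.
Proof. induction l; simpl; auto. rewrite EW_cons, IHl. reflexivity. Qed.
Lemma EW_neg l : EW (rev (map (fun s => (false, s)) l)) = inv (PL l).
Proof. induction l; simpl. gs Hg. reflexivity.
  rewrite EW_app, IHl. unfold eval_word. simpl. unfold prodl. simpl. gs Hg. reflexivity. Qed.

Lemma lg_mono (T : G -> Prop) g n m : lg_le mul one inv T g n -> n <= m -> lg_le mul one inv T g m.
Proof. intros [w [H1 [H2 H3]]] H. exists w. repeat split; auto. lia. Qed.
Lemma lg_mul (T : G -> Prop) x y n m : lg_le mul one inv T x n -> lg_le mul one inv T y m ->
   lg_le mul one inv T (x ** y) (n + m).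
Proof. intros [w [H1 [H2 H3]]] [w' [H1' [H2' H3']]]. exists (w ++ w'). repeat split.
  apply Forall_app; auto. rewrite EW_app; subst; auto. rewrite length_app. lia. Qed.

Lemma zcomb' a b : zD a ** zD b = zD (a + b).
Proof. rewrite (zpow_add mul one inv Hg). auto. Qed.
Lemma zinv a : inv (zD a) = zD (- a).
Proof. rewrite (zpow_opp mul one inv Hg). auto. Qed.

Lemma lemA n : forall m, M m -> le m (zD (Z.of_nat n)) ->
  exists l, Forall S l /\ PL l = m /\ length l <= n.
Proof.
  induction n; intros m Hm Hle.
  - simpl in Hle. rewrite (zpow0 mul one inv Hg), (m1r Hg) in Hle.
    assert (m = one) by (apply Mpt; auto). subst. exists []. simpl. repeat split; auto.
  - assert (Hle' : le (m ** zD (-1)) (zD (Z.of_nat n))).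
    { apply (le_mulr (-1)) in Hle. rewrite zcomb' in Hle.
      replace (Z.of_nat (Datatypes.S n) + -1)%Z with (Z.of_nat n) in Hle by lia. auto. }
    destruct (meet_ex m (zD (Z.of_nat n))) as [a [Ha1 [Ha2 Ha3]]].
    assert (Ha : M a). { apply (proj2 (le_1 _)). apply Ha3; apply (proj1 (le_1 _)); [auto | apply zM; lia]. }
    destruct (IHn a Ha Ha2) as [l [Hl1 [Hl2 Hl3]]].
    assert (H4 : le (m ** zD (-1)) m).
    { rewrite (zpowm1 mul one inv Hg). gs Hg. apply (proj1 balD). }
    assert (H5 : le (m ** zD (-1)) a) by (apply Ha3; auto).
    set (r := inv a ** m).
    assert (Hr : DL Delta r).
    { split. exact Ha1. unfold leL. rewrite (zpowm1 mul one inv Hg) in H5.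
      apply conjD in H5. destruct H5 as [H5 _].
      replace (inv r ** Delta) with (inv Delta ** (inv (m ** inv Delta) ** a) ** Delta) by (unfold r; gs Hg; auto).
      auto. }
    destruct (classic (r = one)) as [E|E].
    + exists l. repeat split; auto. rewrite Hl2. unfold r in E.
      rewrite <- (mVr' Hg a m), E, (m1r Hg). auto.
    + exists (l ++ [r]). repeat split.
      * apply Forall_app. split; auto. constructor; [split; auto | constructor].
      * rewrite PL_app, Hl2. unfold prodl; simpl. unfold r. gs Hg. auto.
      * rewrite length_app. simpl. lia.
Qed.

Lemma Mchar2 g a b (n : nat) : (a <= 0)%Z -> (0 <= b)%Z -> (b - a <= Z.of_nat n)%Z ->
  le (zD a) g -> le g (zD b) -> lg_le mul one inv S g n.
Proof.
  intros Ha Hb Hab H1 H2.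
  destruct (meet_ex g one) as [u [Hu1 [Hu2 Hu3]]].
  assert (Hx : M (inv u)) by (rewrite <- (m1r Hg (inv u)); auto).
  assert (Hxle : le (inv u) (zD (Z.of_nat (Z.to_nat (- a))))).
  { rewrite Z2Nat.id by lia. rewrite (invI Hg).
    assert (le (zD a) u). { apply Hu3; auto. rewrite (m1r Hg), zinv; apply zM; lia. }
    replace (u ** zD (-a)) with (inv (zD (-a)) ** (inv (zD a) ** u) ** zD (-a)).
    apply zconj; auto. rewrite zinv. replace (- - a)%Z with a by lia. gs Hg. auto. }
  destruct (lemA _ _ Hx Hxle) as [lx [Hx1 [Hx2 Hx3]]].
  assert (Hy : M (inv u ** g)) by auto.
  assert (Hyle : le (inv u ** g) (zD (Z.of_nat (Z.to_nat b)))).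
  { rewrite Z2Nat.id by lia.
    assert (le (g ** zD (- b)) u).
    { apply Hu3.
      - replace g with (g ** zD 0) at 2 by (rewrite (zpow0 mul one inv Hg); gs Hg; auto).
        apply le_zr. lia.
      - apply (le_mulr (-b)) in H2. rewrite zcomb' in H2. replace (b + - b)%Z with 0%Z in H2 by lia.
        rewrite (zpow0 mul one inv Hg) in H2. auto. }
    replace (inv (inv u ** g) ** zD b) with (inv (zD b) ** (inv (g ** zD (- b)) ** u) ** zD b).
    apply zconj; auto. rewrite (invM Hg), zinv. replace (- - b)%Z with b by lia. gs Hg. auto. }
  destruct (lemA _ _ Hy Hyle) as [ly [Hy1 [Hy2 Hy3]]].
  exists (rev (map (fun s => (false, s)) lx) ++ map (fun s => (true, s)) ly). repeat split.
  - apply Forall_app. split.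
    + apply Forall_rev. apply Forall_map. eapply Forall_impl; [|exact Hx1]. auto.
    + apply Forall_map. eapply Forall_impl; [|exact Hy1]. auto.
  - rewrite EW_app, EW_neg, EW_pos, Hx2, Hy2. gs Hg. auto.
  - rewrite length_app, length_rev, !length_map. lia.
Qed.

Lemma M1w w : Forall (fun p => S (snd p)) w -> exists a b, (a <= 0)%Z /\ (0 <= b)%Z /\
   (b - a <= Z.of_nat (length w))%Z /\ le (zD a) (EW w) /\ le (EW w) (zD b).
Proof.
  induction 1 as [|p w Hp Hw IH].
  - exists 0%Z, 0%Z. simpl. repeat split; try lia; unfold eval_word; simpl; rewrite (zpow0 mul one inv Hg); apply le_refl.
  - destruct IH as [a [b [Ha [Hb [Hab [H1 H2]]]]]].
    destruct p as [bo s]. destruct Hp as [[Hs1 Hs2] Hs3]. simpl in Hs1, Hs2.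
    unfold leL in Hs2.
    rewrite EW_cons. destruct bo; unfold letter; simpl.
    + exists a, (b + 1)%Z. repeat split; try lia.
      * eapply le_trans; [|apply le_mull; exact H1].
        replace (inv (zD a) ** (s ** zD a)) with (inv (zD a) ** s ** zD a) by (gs Hg; auto).
        apply zconj; auto.
      * eapply le_trans; [apply le_mull; exact H2|].
        rewrite Z.add_comm, <- zcomb', (zpow1 mul one inv Hg).
        replace (inv (s ** zD b) ** (Delta ** zD b)) with (inv (zD b) ** (inv s ** Delta) ** zD b) by (gs Hg; auto).
        apply zconj; auto.
    + exists (a - 1)%Z, b. repeat split; try lia.
      * eapply le_trans; [|apply le_mull; exact H1].
        replace (a - 1)%Z with (-1 + a)%Z by lia. rewrite <- zcomb', (zpowm1 mul one inv Hg).
        replace (inv (inv Delta ** zD a) ** (inv s ** zD a)) with (inv (zD a) ** (Delta ** inv s) ** zD a) by (gs Hg; auto).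
        apply zconj. apply (bal_R _ balD). split; auto.
      * eapply le_trans; [apply le_mull; exact H2|].
        replace (inv (inv s ** zD b) ** zD b) with (inv (zD b) ** s ** zD b) by (gs Hg; auto).
        apply zconj; auto.
Qed.

Lemma Mchar1 g n : lg_le mul one inv S g n -> exists a b, (a <= 0)%Z /\ (0 <= b)%Z /\
   (b - a <= Z.of_nat n)%Z /\ le (zD a) g /\ le g (zD b).
Proof. intros [w [H1 [H2 H3]]]. destruct (M1w w H1) as [a [b [? [? [? [? ?]]]]]].
  exists a, b. subst. repeat split; auto. lia. Qed.


Local Notation NN := (Pilot.Defs.Nsub mul one inv M delta).
Local Notation Hh := (Hsub mul one inv M delta).
Local Notation pwd := (pw mul one delta).

Lemma Mdelta : M delta. Proof. destruct HP as (X&_). auto. Qed.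
Lemma parab_iff b : DL delta b <-> (DL Delta b /\ NN b). Proof. destruct HP as (_&_&X). apply X. Qed.
Lemma dD s : DL delta s -> DL Delta s. Proof. intro. apply parab_iff; auto. Qed.
Lemma PLcons x l : PL (x :: l) = x ** PL l. Proof. reflexivity. Qed.
Lemma N1 : NN one. Proof. exists []. split; auto. Qed.
Lemma Nmul x y : NN x -> NN y -> NN (x ** y).
Proof. intros [l [H1 H2]] [l' [H1' H2']]. exists (l ++ l'). split. apply Forall_app; auto.
  rewrite PL_app. subst; auto. Qed.
Lemma Ndiv s : DL delta s -> NN s.
Proof. intro. exists [s]. split. constructor; auto. unfold prodl; simpl. gs Hg. auto. Qed.
Lemma PLM e l : Forall (DL e) l -> M (PL l).
Proof. induction 1 as [|x l Hx Hl IH]. apply M1. rewrite PLcons. apply Mmul; auto. apply Hx. Qed.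
Lemma NM x : NN x -> M x.
Proof. intros [l [H1 H2]]. subst. apply (PLM delta); auto. Qed.
Lemma parab w : DL Delta w -> NN w -> DL delta w. Proof. intros. apply parab_iff; auto. Qed.
Lemma one_le x : M x -> le x one -> x = one.
Proof. intros. apply Mpt; auto. rewrite <- (m1r Hg (inv x)). auto. Qed.
Lemma Mle x y : M x -> le x y -> M y.
Proof. intros. replace y with (x ** (inv x ** y)) by (gs Hg; auto). apply Mmul; auto. Qed.

Lemma claimC l : Forall (DL delta) l -> forall v, DL Delta v -> le v (PL l) ->
   DL delta v /\ NN (inv v ** PL l).
Proof.
  induction 1 as [|s l Hs Hl IH]; intros v Hv Hvx.
  - simpl in Hvx. assert (v = one) by (apply one_le; [apply Hv | auto]). subst v.
    split. split. apply M1. unfold leL. gs Hg. apply Mdelta. gs Hg. apply N1.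
  - rewrite PLcons in *. set (y := PL l) in *.
    assert (HyM : M y) by (apply (PLM delta); auto).
    destruct (join_ex v s) as [w [Hw1 [Hw2 Hw3]]].
    assert (HsD : DL Delta s) by (apply dD; auto).
    assert (HwD : le w Delta) by (apply Hw3; [apply Hv | apply HsD]).
    assert (Hwsy : le w (s ** y)) by (apply Hw3; auto; gs Hg; auto).
    set (t := inv s ** w).
    assert (Ht : DL Delta t).
    { split. exact Hw2. unfold leL. eapply le_trans. apply (le_mull (inv s)); exact HwD.
      apply (c1 _ balD s HsD). }
    assert (Hty : le t y). { apply (le_mull (inv s)) in Hwsy. rewrite (mVl' Hg) in Hwsy. exact Hwsy. }
    destruct (IH t Ht Hty) as [Htd HtN].
    assert (HwM : M w) by (apply (Mle v); auto; apply Hv).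
    assert (Hwd : DL delta w).
    { apply parab. split; auto. replace w with (s ** t) by (unfold t; gs Hg; auto).
      apply Nmul; auto. apply Ndiv; auto. apply Ndiv; auto. }
    assert (Hvd : DL delta v). { split. apply Hv. unfold leL. eapply le_trans. exact Hw1. apply Hwd. }
    split; auto.
    replace (inv v ** (s ** y)) with ((inv v ** w) ** (inv t ** y)) by (unfold t; gs Hg; auto).
    apply Nmul; auto. apply Ndiv. split; auto. unfold leL.
    eapply le_trans. apply (le_mull (inv v)). apply Hwd. apply (c1 _ bald v Hvd).
Qed.

Lemma PC l : Forall (DL Delta) l -> forall x, NN x -> le (PL l) x -> NN (PL l) /\ NN (inv (PL l) ** x).
Proof.
  induction 1 as [|v l Hv Hl IH]; intros x Hx Hle.
  - simpl. split. apply N1. gs Hg. auto.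
  - rewrite PLcons in *. set (u := PL l) in *.
    assert (HuM : M u) by (apply (PLM Delta); auto).
    assert (Hvx : le v x). { eapply le_trans; [|exact Hle]. gs Hg. auto. }
    destruct Hx as [lx [Hlx1 Hlx2]]. subst x.
    destruct (claimC lx Hlx1 v Hv Hvx) as [Hvd HN].
    assert (Hu : le u (inv v ** PL lx)).
    { replace (inv u ** (inv v ** PL lx)) with (inv (v ** u) ** PL lx) by (gs Hg; auto). auto. }
    destruct (IH _ HN Hu) as [IH1 IH2]. split.
    + apply Nmul; auto. apply Ndiv; auto.
    + replace (inv (v ** u) ** PL lx) with (inv u ** (inv v ** PL lx)) by (gs Hg; auto). auto.
Qed.

Lemma prefix u x : M u -> NN x -> le u x -> NN u.
Proof. intros Hu Hx Hle. apply M_gen in Hu. destruct Hu as [l [H1 H2]]. subst u.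
  apply (PC l H1 x Hx Hle). Qed.

Local Notation flip := (fun p : bool * G => (negb (fst p), snd p)).
Lemma EW_flip w : EW (rev (map flip w)) = inv (EW w).
Proof. induction w as [|[b s] w IH]; simpl. unfold eval_word; simpl. gs Hg. auto.
  rewrite EW_app, IH, EW_cons. unfold eval_word at 2. simpl. unfold prodl; simpl.
  destruct b; rewrite EW_cons; unfold letter; simpl; gs Hg; auto. Qed.
Lemma H1 : Hh one. Proof. exists []. split; auto. Qed.
Lemma Hmul x y : Hh x -> Hh y -> Hh (x ** y).
Proof. intros [w [A B]] [w' [A' B']]. exists (w ++ w'). split. apply Forall_app; auto.
  rewrite EW_app. subst; auto. Qed.
Lemma Hinv x : Hh x -> Hh (inv x).
Proof. intros [w [A B]]. exists (rev (map flip w)). split.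
  apply Forall_rev. apply Forall_map. eapply Forall_impl; [|exact A]. simpl. auto.
  rewrite EW_flip. subst; auto. Qed.
Lemma HN x : NN x -> Hh x.
Proof. intros [l [A B]]. exists (map (fun s => (true, s)) l). split.
  apply Forall_map. eapply Forall_impl; [|exact A]. simpl. auto. rewrite EW_pos. auto. Qed.

Lemma pwd_N k : NN (pwd k).
Proof. induction k. apply N1. rewrite (pwS mul one). apply Nmul; auto. apply Ndiv. split. apply Mdelta.
  unfold leL. rewrite (mVl Hg). apply M1. Qed.

Lemma phipsi k s : DL delta s -> DL delta (inv (pwd k) ** s ** pwd k) /\ DL delta (pwd k ** s ** inv (pwd k)).
Proof. intro Hs. induction k.
  - rewrite (pw0 mul one). gs Hg. auto.
  - destruct IHk as [I1 I2]. split.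
    + rewrite (pwS' mul one inv Hg). replace (inv (pwd k ** delta) ** s ** (pwd k ** delta)) with
        (inv delta ** (inv (pwd k) ** s ** pwd k) ** delta) by (gs Hg; auto). apply (c3 _ bald); auto.
    + rewrite (pwS mul one). replace (delta ** pwd k ** s ** inv (delta ** pwd k)) with
        (delta ** (pwd k ** s ** inv (pwd k)) ** inv delta) by (gs Hg; auto). apply (c4 _ bald); auto.
Qed.

Lemma lemB h : Hh h -> exists k, le (inv (pwd k)) h /\ le h (pwd k).
Proof.
  intros [w [Hw E]]. subst h. induction Hw as [|[b s] w Hs Hw IH].
  - exists 0. unfold eval_word; simpl. try rewrite (pw0 mul one). gs Hg. split; apply M1.
  - destruct IH as [k [IH1 IH2]]. simpl in Hs. exists (Datatypes.S k). rewrite EW_cons.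
    set (h := EW w) in *. destruct (phipsi k s Hs) as [[Hp1 Hp2] [Hq1 Hq2]].
    destruct b; unfold letter; cbn [fst snd]; split.
    + eapply le_trans. 2: { eapply le_trans. 2: { apply le_mull. exact IH1. }
        replace (inv (inv (pwd k)) ** (s ** inv (pwd k))) with (pwd k ** s ** inv (pwd k)) by (gs Hg; auto). auto. }
      rewrite (pwS mul one). gs Hg. apply Mdelta.
    + eapply le_trans. apply le_mull. exact IH2.
      replace (s ** pwd k) with (pwd k ** (inv (pwd k) ** s ** pwd k)) by (gs Hg; auto).
      rewrite (pwS' mul one inv Hg). apply le_mull. auto.
    + eapply le_trans. 2: { apply le_mull. exact IH1. }
      rewrite (pwS mul one). replace (inv (inv (delta ** pwd k)) ** (inv s ** inv (pwd k))) with
        (delta ** inv (pwd k ** s ** inv (pwd k))) by (gs Hg; auto). apply (bal_R _ bald). split; auto.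
    + eapply le_trans. apply le_mull. exact IH2.
      rewrite (pwS' mul one inv Hg). replace (inv (inv s ** pwd k) ** (pwd k ** delta)) with
        ((inv (pwd k) ** s ** pwd k) ** delta) by (gs Hg; auto). apply Mmul; auto. apply Mdelta.
Qed.

Lemma HM_N h : Hh h -> M h -> NN h.
Proof. intros Hh Hm. destruct (lemB h Hh) as [k [_ Hk]]. apply (prefix h (pwd k)); auto. apply pwd_N. Qed.

Lemma convex l u g : Hh l -> Hh u -> le l g -> le g u -> Hh g.
Proof.
  intros Hl Hu H1 H2.
  assert (HX : NN (inv l ** u)). { apply HM_N. apply Hmul; auto. apply Hinv; auto. eapply le_trans; eauto. }
  assert (HY : NN (inv l ** g)). { apply (prefix _ (inv l ** u)); auto. apply le_mull; auto. }
  replace g with (l ** (inv l ** g)) by (gs Hg; auto). apply Hmul; auto. apply HN; auto.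
Qed.

Lemma meetH h1 h2 m : Hh h1 -> Hh h2 -> le m h1 -> le m h2 -> (forall c, le c h1 -> le c h2 -> le c m) -> Hh m.
Proof.
  intros A B C D E. destruct (lemB (inv h1 ** h2)) as [k [Hk _]]. apply Hmul; auto. apply Hinv; auto.
  apply (convex (h1 ** inv (pwd k)) h1); auto.
  - apply Hmul; auto. apply Hinv, HN, pwd_N.
  - apply E.
    + replace h1 with (h1 ** one) at 2 by (gs Hg; auto). apply le_mull. gs Hg. apply NM, pwd_N.
    + apply (le_mull h1) in Hk. rewrite (mVr' Hg) in Hk. auto.
Qed.

Lemma joinH h1 h2 j : Hh h1 -> Hh h2 -> le h1 j -> le h2 j -> (forall c, le h1 c -> le h2 c -> le j c) -> Hh j.
Proof.
  intros A B C D E. destruct (lemB (inv h1 ** h2)) as [k [_ Hk]]. apply Hmul; auto. apply Hinv; auto.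
  apply (convex h1 (h1 ** pwd k)); auto.
  - apply Hmul; auto. apply HN, pwd_N.
  - apply E.
    + gs Hg. apply NM, pwd_N.
    + apply (le_mull h1) in Hk. rewrite (mVr' Hg) in Hk. auto.
Qed.


Lemma le_zr0 x a : (a <= 0)%Z -> le (x ** zD a) x.
Proof. intro. replace x with (x ** zD 0) at 2 by (rewrite (zpow0 mul one inv Hg); gs Hg; auto). apply le_zr; auto. Qed.
Lemma le_zr0' x b : (0 <= b)%Z -> le x (x ** zD b).
Proof. intro. replace x with (x ** zD 0) at 1 by (rewrite (zpow0 mul one inv Hg); gs Hg; auto). apply le_zr; auto. Qed.
Lemma le_sh x y a b c : le x (y ** zD a) -> (a + c = b)%Z -> le (x ** zD c) (y ** zD b).
Proof. intros H E. apply (le_mulr c) in H. rewrite zcomb, E in H. auto. Qed.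
Lemma le_sh' x y a b c : le (x ** zD a) y -> (a + c = b)%Z -> le (x ** zD b) (y ** zD c).
Proof. intros H E. apply (le_mulr c) in H. rewrite zcomb, E in H. auto. Qed.

Lemma core (alpha B gam : G) (P Q D2 j : Z) :
  Hh B -> Hh gam -> (0 <= P)%Z -> (0 <= Q)%Z -> (0 <= j)%Z -> (j <= D2)%Z ->
  (P + Q - D2 <= 2)%Z -> (D2 <= P + Q)%Z ->
  le (alpha ** zD (- P)) B -> le B (alpha ** zD Q) ->
  le (alpha ** zD (- j)) gam -> le gam (alpha ** zD (D2 - j)) ->
  exists z j', Hh z /\ (0 <= j')%Z /\ (j' <= D2)%Z /\ le (alpha ** zD (- j')) z /\ le z (alpha ** zD (D2 - j')) /\
   exists a b, (a <= 0)%Z /\ (0 <= b)%Z /\ (b - a <= 2)%Z /\ le (B ** zD a) z /\ le z (B ** zD b).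
Proof.
  intros HB Hgam HP0 HQ0 Hj0 HjD Hw1 Hw2 HB1 HB2 Hg1 Hg2.
  assert (Hal1 : le alpha (B ** zD P)).
  { apply (le_mulr P) in HB1. rewrite zcomb in HB1. replace (- P + P)%Z with 0%Z in HB1 by lia.
    rewrite (zpow0 mul one inv Hg), (m1r Hg) in HB1. auto. }
  assert (Hal2 : le (B ** zD (- Q)) alpha) by (apply shift1; auto).
  destruct (Z_le_gt_dec P j) as [CA|CA]; [|destruct (Z_le_gt_dec j (D2 - Q)) as [CB|CB]].
  -
    destruct (meet_ex B (alpha ** zD (D2 - P))) as [z [Hz1 [Hz2 Hz3]]].
    destruct (meet_ex B gam) as [l [Hl1 [Hl2 Hl3]]].
    assert (Hgu : le gam (alpha ** zD (D2 - P))) by (eapply le_trans; [exact Hg2| apply le_zr; lia]).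
    exists z, P. split; [|split; [lia|split; [lia|split; [|split]]]].
    + apply (convex l B); auto. eapply meetH; [exact HB|exact Hgam|..]; eauto.
      apply Hz3; auto. eapply le_trans; eauto.
    + apply Hz3; auto. apply le_zr; lia.
    + auto.
    + exists (D2 - P - Q)%Z, 0%Z. repeat split; try lia.
      * apply Hz3. apply le_zr0; lia.
        replace (D2 - P - Q)%Z with (- Q + (D2 - P))%Z by lia. rewrite <- zcomb. apply le_mulr; auto.
      * rewrite (zpow0 mul one inv Hg), (m1r Hg). auto.
  -
    destruct (join_ex B (alpha ** zD (Q - D2))) as [z [Hz1 [Hz2 Hz3]]].
    destruct (join_ex B gam) as [u [Hu1 [Hu2 Hu3]]].
    assert (Hlg : le (alpha ** zD (Q - D2)) gam) by (eapply le_trans; [apply le_zr|exact Hg1]; lia).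
    exists z, (D2 - Q)%Z. split; [|split; [lia|split; [lia|split; [|split]]]].
    + apply (convex B u); auto. eapply joinH; [exact HB|exact Hgam|..]; eauto.
      apply Hz3; auto. eapply le_trans; eauto.
    + replace (- (D2 - Q))%Z with (Q - D2)%Z by lia. auto.
    + replace (D2 - (D2 - Q))%Z with Q by lia. apply Hz3; auto. apply le_zr; lia.
    + exists 0%Z, (P + Q - D2)%Z. repeat split; try lia.
      * rewrite (zpow0 mul one inv Hg), (m1r Hg). auto.
      * apply Hz3. apply le_zr0'; lia.
        replace (P + Q - D2)%Z with (P + (Q - D2))%Z by lia. rewrite <- zcomb. apply le_mulr; auto.
  -
    destruct (join_ex B (alpha ** zD (- j))) as [J [HJ1 [HJ2 HJ3]]].
    destruct (meet_ex J (alpha ** zD (D2 - j))) as [z [Hz1 [Hz2 Hz3]]].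
    destruct (meet_ex B gam) as [l [Hl1 [Hl2 Hl3]]].
    destruct (join_ex B gam) as [u [Hu1 [Hu2 Hu3]]].
    exists z, j. split; [|split; [lia|split; [lia|split; [|split]]]].
    + apply (convex l u).
      * eapply meetH; [exact HB|exact Hgam|..]; eauto.
      * eapply joinH; [exact HB|exact Hgam|..]; eauto.
      * apply Hz3; [eapply le_trans; [exact Hl1|exact HJ1] | eapply le_trans; [exact Hl2|exact Hg2]].
      * eapply le_trans. exact Hz1. apply HJ3; [exact Hu1| eapply le_trans; [exact Hg1|exact Hu2]].
    + apply Hz3; auto. apply le_zr; lia.
    + auto.
    + exists (D2 - j - Q)%Z, (P - j)%Z. repeat split; try lia.
      * apply Hz3. eapply le_trans; [apply le_zr0; lia|exact HJ1].
        replace (D2 - j - Q)%Z with (- Q + (D2 - j))%Z by lia. rewrite <- zcomb. apply le_mulr; auto.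
      * eapply le_trans. exact Hz1. apply HJ3. apply le_zr0'; lia.
        replace (P - j)%Z with (P + - j)%Z by lia. rewrite <- zcomb. apply le_mulr; auto.
Qed.


Lemma least (Pn : nat -> Prop) n : Pn n -> exists k, Pn k /\ forall m, Pn m -> k <= m.
Proof.
  induction n as [n IH] using (well_founded_induction lt_wf). intro Hn.
  destruct (classic (exists m, m < n /\ Pn m)) as [[m [Hm1 Hm2]]|Hno].
  - apply (IH m Hm1 Hm2).
  - exists n. split; auto. intros m Hm. destruct (le_lt_dec n m); auto. exfalso; apply Hno; eauto.
Qed.

Lemma lg_exact (T : G -> Prop) g n : lg_le mul one inv T g n -> exists m, m <= n /\ lg_is mul one inv T g m.
Proof. intro H. destruct (least _ n H) as [k [Hk1 Hk2]]. exists k. split. apply Hk2; auto.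
  split; auto. Qed.

Lemma to_lo x y a : le (zD a) (inv x ** y) -> le (x ** zD a) y.
Proof. intro H. apply (le_mull x) in H. rewrite (mVr' Hg) in H. auto. Qed.
Lemma to_hi x y b : le (inv x ** y) (zD b) -> le y (x ** zD b).
Proof. intro H. apply (le_mull x) in H. rewrite (mVr' Hg) in H. auto. Qed.
Lemma of_lo x y a : le (x ** zD a) y -> le (zD a) (inv x ** y).
Proof. intro H. apply (le_mull (inv x)) in H. rewrite (mVl' Hg) in H. auto. Qed.
Lemma of_hi x y b : le y (x ** zD b) -> le (inv x ** y) (zD b).
Proof. intro H. apply (le_mull (inv x)) in H. rewrite (mVl' Hg) in H. auto. Qed.

Lemma main_inner : forall alpha1 alpha2 beta1 : G,
    dist_is mul one inv S alpha1 alpha2 1 ->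
    proj mul one inv S Hh alpha1 beta1 ->
    exists beta2 : G, proj mul one inv S Hh alpha2 beta2 /\ dist_le mul one inv S beta1 beta2 5.
Proof.
  intros a1 a2 B Hd [HB [D [HD Hmin]]].
  destruct (Mchar1 _ _ (proj1 HD)) as [a0 [b0 [Ha0 [Hb0 [Hab0 [L0 U0]]]]]].
  apply to_lo in L0. apply to_hi in U0.
  destruct (Mchar1 _ _ (proj1 Hd)) as [a1' [b1 [Ha1 [Hb1 [Hab1 [L1 U1]]]]]].
  apply to_lo in L1. apply to_hi in U1.
  set (P := (- a0 + b1)%Z). set (Q := (b0 - a1')%Z).
  assert (HB1 : le (a2 ** zD (- P)) B).
  { eapply le_trans; [|exact L0]. apply (le_sh _ _ b1). auto. unfold P. lia. }
  assert (HB2 : le B (a2 ** zD Q)).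
  { eapply le_trans; [exact U0|]. apply (le_sh' _ _ a1'). auto. unfold Q. lia. }
  set (Pn := fun n => exists h, Hh h /\ lg_le mul one inv S (inv a2 ** h) n).
  assert (HPQ : Pn (Z.to_nat (P + Q))).
  { exists B. split; auto. apply (Mchar2 _ (- P) Q). lia. lia. lia.
    apply of_lo; auto. apply of_hi; auto. }
  destruct (least Pn _ HPQ) as [D2 [[gam [Hgam HgD]] HD2min]].
  destruct (Mchar1 _ _ HgD) as [a2' [b2 [Ha2 [Hb2 [Hab2 [L2 U2]]]]]].
  apply to_lo in L2. apply to_hi in U2.
  set (j := (- a2')%Z).
  assert (Hg1 : le (a2 ** zD (- j)) gam) by (unfold j; replace (- - a2')%Z with a2' by lia; auto).
  assert (Hg2 : le gam (a2 ** zD (Z.of_nat D2 - j))) by (eapply le_trans; [exact U2|apply le_zr; unfold j; lia]).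
  assert (HDD : D <= 1 + D2).
  { assert (lg_le mul one inv S (inv a1 ** gam) (1 + D2)).
    { replace (inv a1 ** gam) with ((inv a1 ** a2) ** (inv a2 ** gam)) by (gs Hg; auto).
      apply lg_mul; auto. apply Hd. }
    destruct (lg_exact _ _ _ H) as [m [Hm1 Hm2]]. specialize (Hmin gam m Hgam Hm2). lia. }
  assert (HD2PQ : D2 <= Z.to_nat (P + Q)) by (apply HD2min; auto).
  destruct (core a2 B gam P Q (Z.of_nat D2) j HB Hgam) as [z [j' [Hz [Hj'0 [Hj'1 [Lz [Uz [a [b [Ha [Hb [Hab [Lb Ub]]]]]]]]]]]]];
    try (unfold P, Q, j in *; lia); auto.
  exists z. split.
  - split; auto. exists D2.
    assert (HzD : lg_le mul one inv S (inv a2 ** z) D2).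
    { apply (Mchar2 _ (- j') (Z.of_nat D2 - j')); try lia. apply of_lo; auto. apply of_hi; auto. }
    split. split; auto. intros m Hm. apply HD2min. exists z; split; auto.
    intros b' m Hb' Hm. apply HD2min. exists b'. split; auto. apply Hm.
  - apply (Mchar2 _ a b); try lia. apply of_lo; auto. apply of_hi; auto.
Qed.

End Main.

Theorem theorem5p5 (G : Type) (mul : G -> G -> G) (one : G) (inv : G -> G)
  (M : G -> Prop) (Delta delta : G) :
  is_group mul one inv ->
  garside_structure mul one inv M Delta ->
  parabolic_substructure mul one inv M Delta delta ->
  (exists h, Hsub mul one inv M delta h /\ h <> one) ->
  forall alpha1 alpha2 beta1 : G,
    dist_is mul one inv (Sgen mul one inv M Delta) alpha1 alpha2 1 ->
    proj mul one inv (Sgen mul one inv M Delta) (Hsub mul one inv M delta) alpha1 beta1 ->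
    exists beta2 : G,
      proj mul one inv (Sgen mul one inv M Delta) (Hsub mul one inv M delta) alpha2 beta2 /\
      dist_le mul one inv (Sgen mul one inv M Delta) beta1 beta2 5.
Proof.
  intros Hg HG HP _. apply (main_inner mul one inv Hg M Delta delta HG HP).
Qed.
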